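(* Let $\Lambda=[\mu_1,L_1]\cup[\mu_2,L_2]$ with $0<\mu_1<L_1<\mu_2<L_2$. There exists a real polynomial $\sigma$ of degree $2$ with $\sigma(\Lambda)\subseteq[-1,1]$ such that, for every $n\ge1$, $T_n\circ\sigma$ is the solution of $\max\{p(0):p\in\mathbb{R}_{2n}[X],\ \sup_{\lambda\in\Lambda}|p(\lambda)|\le1\}$, if and only if $L_1-\mu_1=L_2-\mu_2$.
   Context: $\mathbb{R}_N[X]$ is the set of real polynomials of degree at most $N$. $T_n$ is the Chebyshev polynomial of the first kind of degree $n$. *)

(* Defs.v *)
From HB Require Import structures.
From mathcomp Require Import all_boot all_order all_algebra.
From mathcomp Require Import reals.
Set Implicit Arguments. Unset Strict Implicit. Unset Printing Implicit Defensive.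
Import Order.TTheory GRing.Theory Num.Theory.
Local Open Scope ring_scope.

(* Chebyshev polynomials of the first kind:
   T_0 = 1, T_1 = X, T_(n+2) = 2 X T_(n+1) - T_n. *)
Fixpoint cheb_pair (R : ringType) (n : nat) : {poly R} * {poly R} :=
  match n with
  | 0%N => (1, 'X)
  | n'.+1 => let: (a, b) := cheb_pair R n' in (b, 2%:R *: 'X * b - a)
  end.

Definition chebT (R : ringType) (n : nat) : {poly R} := (cheb_pair R n).1.

Definition Lambda (R : realType) (mu1 L1 mu2 L2 : R) (x : R) : Prop :=
  (mu1 <= x <= L1) \/ (mu2 <= x <= L2).

Definition feasible (R : realType) (mu1 L1 mu2 L2 : R) (n : nat) (p : {poly R}) : Prop :=
  (size p <= (2 * n).+1)%N /\ forall x, Lambda mu1 L1 mu2 L2 x -> `|p.[x]| <= 1.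

Definition is_solution (R : realType) (mu1 L1 mu2 L2 : R) (n : nat) (q : {poly R}) : Prop :=
  feasible mu1 L1 mu2 L2 n q /\
  forall p, feasible mu1 L1 mu2 L2 n p -> p.[0] <= q.[0].

(* Main.v *)
Require Import Defs.
From HB Require Import structures.
From mathcomp Require Import all_boot all_order all_algebra.
From mathcomp Require Import reals.
From mathcomp Require Import trigo polyrcf.
From mathcomp Require Import ring lra zify.
Import Order.TTheory GRing.Theory Num.Theory.
Local Open Scope ring_scope.

Lemma cheb_pairS (R : realType) n :
  cheb_pair R n.+1 = ((cheb_pair R n).2, 2%:R *: 'X * (cheb_pair R n).2 - (cheb_pair R n).1).
Proof. by rewrite /=; case: (cheb_pair R n). Qed.

Lemma chebT0 (R : realType) : chebT R 0 = 1. Proof. by []. Qed.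
Lemma chebT1 (R : realType) : chebT R 1 = 'X. Proof. by []. Qed.
Lemma chebTSS (R : realType) n :
  chebT R n.+2 = 2%:R *: 'X * chebT R n.+1 - chebT R n.
Proof. by rewrite /chebT /=; case: (cheb_pair R n). Qed.

Lemma hornerTSS (R : realType) n (x : R) :
  (chebT R n.+2).[x] = 2 * x * (chebT R n.+1).[x] - (chebT R n).[x].
Proof. by rewrite chebTSS hornerD hornerN hornerM hornerZ hornerX. Qed.

Lemma chebT_cos (R : realType) n (t : R) : (chebT R n).[cos t] = cos (n%:R * t).
Proof.
suff: (chebT R n).[cos t] = cos (n%:R * t) /\ (chebT R n.+1).[cos t] = cos (n.+1%:R * t) by case.
elim: n => [|n [IH1 IH2]].
  by rewrite chebT0 chebT1 hornerC hornerX mul0r cos0 mul1r.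
split => //; rewrite hornerTSS IH1 IH2.
have E1 : n.+2%:R * t = n.+1%:R * t + t by rewrite -[n.+2]addn1 natrD; ring.
have E2 : n%:R * t = n.+1%:R * t - t by rewrite -[n.+1]addn1 natrD; ring.
have E3 : cos (n%:R * t) = cos (n.+1%:R * t) * cos t + sin (n.+1%:R * t) * sin t.
  by rewrite -cosB -E2.
rewrite E1 E3 cosD; ring.
Qed.

Lemma cos_natpi (R : realType) k : cos (k%:R * pi) = (-1) ^+ k :> R.
Proof.
elim: k => [|k IH]; first by rewrite mul0r cos0 expr0.
by rewrite -addn1 natrD mulrDl mul1r cosDpi IH exprD expr1 mulrN1.
Qed.

Lemma chebT_bound (R : realType) n (y : R) : -1 <= y <= 1 -> `|(chebT R n).[y]| <= 1.
Proof.
move=> Hy; rewrite -(acosK Hy) chebT_cos ler_norml cos_le1 andbT; exact: cos_geN1.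
Qed.

Lemma chebT_ge1 (R : realType) n (y : R) : 1 <= y -> 1 <= (chebT R n).[y].
Proof.
move=> Hy.
suff: 1 <= (chebT R n).[y] <= (chebT R n.+1).[y] by case/andP.
elim: n => [|n /andP[IH1 IH2]].
  by rewrite chebT0 chebT1 hornerC hornerX lexx.
rewrite hornerTSS; apply/andP; split; first lra.
nra.
Qed.

Lemma size_chebT (R : realType) n : (size (chebT R n) <= n.+1)%N.
Proof.
suff: (size (chebT R n) <= n.+1)%N /\ (size (chebT R n.+1) <= n.+2)%N by case.
elim: n => [|n [IH1 IH2]].
  by rewrite chebT0 chebT1 size_polyX size_poly1.
split => //; rewrite chebTSS.
apply: (leq_trans (size_polyD _ _)); rewrite size_polyN.
rewrite geq_max; apply/andP; split; last by move: IH1; lia.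
apply: (leq_trans (size_polyMleq _ _)).
have : (size (2%:R *: ('X : {poly R})) <= 2)%N.
  by apply: (leq_trans (size_scale_leq _ _)); rewrite size_polyX.
move=> H; have := leq_add H IH2; move: (size (2%:R *: ('X : {poly R}))) (size (chebT R n.+1)) => a b; lia.
Qed.


Lemma horner_size3 (R : realType) (s : {poly R}) (x : R) :
  size s = 3%N -> s.[x] = s`_0 + s`_1 * x + s`_2 * x ^+ 2.
Proof.
move=> H; rewrite horner_coef H !big_ord_recl big_ord0 /=.
rewrite expr0 mulr1 expr1 addr0 /bump /=; ring.
Qed.

Lemma lead_size3 (R : realType) (s : {poly R}) : size s = 3%N -> s`_2 != 0.
Proof.
move=> H; have : lead_coef s != 0 by rewrite lead_coef_eq0 -size_poly_eq0 H.
by rewrite lead_coefE H.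
Qed.

Lemma quad_exists (R : realType) (a b c : R) : a != 0 ->
  exists s : {poly R}, size s = 3%N /\ forall x, s.[x] = c + b * x + a * x ^+ 2.
Proof.
move=> Ha; exists (Poly [:: c; b; a]).
have Hs : size (Poly [:: c; b; a]) = 3%N by rewrite (PolyK (c:=0)).
split => // x; by rewrite horner_size3 // !coef_Poly.
Qed.

Lemma incr_le (R : realType) (f : nat -> R) m :
  (forall k, (k < m)%N -> f k < f k.+1) -> forall i j, (i <= j <= m)%N -> f i <= f j.
Proof.
move=> H i j /andP[Hij Hjm]; elim: j Hij Hjm => [|j IH] Hij Hjm.
  by move: Hij; rewrite leqn0 => /eqP->.
move: Hij; rewrite leq_eqVlt => /orP[/eqP->//|Hij].
apply: le_trans (IH Hij (ltnW Hjm)) _; exact/ltW/H.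
Qed.

Lemma alt_roots (R : realType) (r : {poly R}) m : forall (f : nat -> R) (e : R),
  (forall k, (k < m)%N -> f k < f k.+1) ->
  (forall k, (k <= m)%N -> 0 < (-1) ^+ k * e * r.[f k]) ->
  exists s : seq R, size s = m /\ sorted <%R s /\
     all (fun z => f 0%N < z < f m) s /\ all (root r) s.
Proof.
elim: m => [|m IH] f e Hf Hs; first by exists [::].
have [s [Hsz [Hso [Hin Hro]]]] := IH (fun k => f k.+1) (- e)
  (fun k Hk => Hf k.+1 Hk)
  (fun k Hk => ltac:(by move: (Hs k.+1 Hk); rewrite exprS; congr (0 < _); ring)).
have H0 := Hs 0%N isT; have H1 := Hs 1%N isT.
rewrite expr0 mul1r in H0; rewrite expr1 in H1.
have Hneg : r.[f 0%N] * r.[f 1%N] < 0 by nra.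
have [z Hzi Hz] := poly_ivtoo (ltW (Hf 0%N isT)) Hneg.
move: Hzi; rewrite in_itv /= => /andP[Hz1 Hz2].
exists (z :: s); split; first by rewrite /= Hsz.
have Hf1m : f 1%N <= f m.+1 by apply: (@incr_le R f m.+1 Hf); lia.
split.
  rewrite /= (path_sortedE lt_trans) Hso andbT.
  apply/allP => y Hy; move/allP: Hin => /(_ y Hy) /andP[Hy1 _]; exact: lt_trans Hz2 Hy1.
split; last by rewrite /= Hz Hro.
rewrite /= Hz1 /= (lt_le_trans Hz2 Hf1m) /=.
apply/allP => y Hy; move/allP: Hin => /(_ y Hy) /andP[Hy1 Hy2].
by rewrite Hy2 andbT; apply: lt_trans (Hf 0%N isT) Hy1.
Qed.


Lemma sign_sq (R : realType) k : (-1) ^+ k * (-1) ^+ k = 1 :> R.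
Proof. by rewrite -exprMn mulrNN mulr1 expr1n. Qed.

Lemma chebT_N (R : realType) n (y : R) : (chebT R n).[- y] = (-1) ^+ n * (chebT R n).[y].
Proof.
suff: (chebT R n).[- y] = (-1) ^+ n * (chebT R n).[y] /\
      (chebT R n.+1).[- y] = (-1) ^+ n.+1 * (chebT R n.+1).[y] by case.
elim: n => [|n [IH1 IH2]].
  by rewrite chebT0 chebT1 !hornerC !hornerX expr0 expr1 !mul1r mulN1r.
split => //; rewrite !hornerTSS IH1 IH2 !exprS; ring.
Qed.

Lemma cos_pts (R : realType) (N k : nat) : (0 < N)%N -> (k <= N)%N ->
  (chebT R N).[cos (k%:R * pi / N%:R)] = (-1) ^+ k /\
  -1 <= cos (k%:R * (pi : R) / N%:R) <= 1.
Proof.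
move=> HN Hk; split; last by rewrite cos_le1 cos_geN1.
rewrite chebT_cos.
have -> : N%:R * (k%:R * pi / N%:R) = k%:R * pi :> R.
  by field; rewrite pnatr_eq0 -lt0n.
exact: cos_natpi.
Qed.

Lemma cos_pts_decr (R : realType) (N k : nat) : (0 < N)%N -> (k < N)%N ->
  cos (k.+1%:R * pi / N%:R) < cos (k%:R * pi / N%:R) :> R.
Proof.
move=> HN Hk.
have Np : 0 < N%:R :> R by rewrite ltr0n.
have pip := pi_gt0 R.
have Hkk : k%:R < k.+1%:R :> R by rewrite ltr_nat.
have HkN : k.+1%:R <= N%:R :> R by rewrite ler_nat.
have H0 : k%:R * pi / N%:R \in `[0, (pi : R)].
  rewrite in_itv /=; apply/andP; split.
    by rewrite divr_ge0 ?mulr_ge0 ?ler0n // ltW.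
  rewrite ler_pdivrMr // mulrC ler_pM2l //; apply: ltW; exact: lt_le_trans Hkk HkN.
have H1 : k.+1%:R * pi / N%:R \in `[0, (pi : R)].
  rewrite in_itv /=; apply/andP; split.
    by rewrite divr_ge0 ?mulr_ge0 ?ler0n // ltW.
  by rewrite ler_pdivrMr // mulrC ler_pM2l.
rewrite (ltr_cos H0 H1) ltr_pM2r ?invr_gt0 // ltr_pM2r //.
Qed.


Lemma sgn_pos (R : realType) (sg t x : R) :
  sg * sg = 1 -> `|x| <= 1 -> 0 < t < 1 -> 0 < sg * (sg - t * x).
Proof.
move=> Hsg; rewrite ler_norml => /andP[x1 x2] /andP[t0 t1].
have : sg = 1 \/ sg = -1.
  have E : (sg - 1) * (sg + 1) = sg * sg - 1 by ring.
  move: E; rewrite Hsg subrr => /eqP; rewrite mulf_eq0 => /orP[/eqP H|/eqP H]; [left|right]; lra.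
case=> ->; nra.
Qed.

Lemma if_dir (R : realType) (mu1 L1 mu2 L2 : R) :
  0 < mu1 -> mu1 < L1 -> L1 < mu2 -> mu2 < L2 -> L1 - mu1 = L2 - mu2 ->
  exists sigma : {poly R},
      size sigma = 3%N /\
      (forall x, Lambda mu1 L1 mu2 L2 x -> -1 <= sigma.[x] <= 1) /\
      (forall n : nat, (1 <= n)%N ->
         is_solution mu1 L1 mu2 L2 n (chebT R n \Po sigma)).
Proof.
move=> h0 h1 h2 h3 hd.
pose D := (L1 - mu1) * (mu2 - mu1).
have Dp : 0 < D by rewrite mulr_gt0 // subr_gt0 // (lt_trans h1 h2).
have Dn : D != 0 by rewrite gt_eqF.
have [s [Hs Hsx]] := quad_exists R (2/D) (-(2/D)*(L1+mu2)) (2/D * L1 * mu2 - 1)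
   ltac:(by rewrite gt_eqF // divr_gt0).
have Hsig : forall x, s.[x] = 2/D * ((x - L1) * (x - mu2)) - 1.
  by move=> x; rewrite Hsx; ring.
exists s; split => //.
have Hrange : forall x, Lambda mu1 L1 mu2 L2 x -> -1 <= s.[x] <= 1.
  move=> x Hx; rewrite Hsig.
  have HP : 0 <= (x - L1) * (x - mu2) <= D.
    case: Hx => /andP[a b]; rewrite /D; apply/andP; split; nra.
  move/andP: HP => [P0 P1].
  have E : 2/D * ((x - L1) * (x - mu2)) = 2 * ((x - L1) * (x - mu2) / D) by field.
  have Q0 : 0 <= (x - L1) * (x - mu2) / D by rewrite divr_ge0 // ltW.
  have Q1 : (x - L1) * (x - mu2) / D <= 1 by rewrite ler_pdivrMr // mul1r.
  rewrite E; apply/andP; split; lra.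
split => // n Hn.
pose q := chebT R n \Po s.
have Hq : forall x, q.[x] = (chebT R n).[s.[x]] by move=> x; rewrite horner_comp.
have Hqsz : (size q <= (2 * n).+1)%N.
  apply: leq_trans (size_comp_poly_leq _ _) _; rewrite Hs.
  have := size_chebT R n; move: (size (chebT R n)) => a; lia.
have Hfeas : feasible mu1 L1 mu2 L2 n q.
  split => // x Hx; rewrite Hq; apply: chebT_bound; exact: Hrange.
split => // p [Hpsz Hpb].
have Hs0 : 1 < s.[0].
  rewrite Hsig !sub0r mulrNN.
  have : D < L1 * mu2 by rewrite /D; nra.
  move=> HD; have : 1 < L1 * mu2 / D by rewrite ltr_pdivlMr // mul1r.
  have -> : 2 / D * (L1 * mu2) = 2 * (L1 * mu2 / D) by field.
  lra.
have Hq0 : 1 <= q.[0] by rewrite Hq; apply: chebT_ge1; exact: ltW.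
case: (lerP p.[0] q.[0]) => // Hlt; exfalso.
have p0 : 0 < p.[0] by apply: lt_trans Hlt; lra.
pose t := q.[0] / p.[0].
have t0 : 0 < t by rewrite divr_gt0 //; lra.
have t1 : t < 1 by rewrite ltr_pdivrMr // mul1r.
pose r := q - t *: p.
have Hr : forall x, r.[x] = q.[x] - t * p.[x].
  by move=> x; rewrite hornerD hornerN hornerZ.
have Hr0 : r.[0] = 0 by rewrite Hr /t; field; rewrite gt_eqF.
pose h := (mu2 - L1) / 2; pose v := (L1 + mu2) / 2.
pose S := fun y : R => Num.sqrt (h ^+ 2 + (y + 1) * D / 2).
have HS : forall y, -1 <= y -> 0 <= S y /\ S y ^+ 2 = h ^+ 2 + (y + 1) * D / 2.
  move=> y Hy; split; first exact: sqrtr_ge0.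
  rewrite sqr_sqrtr //; apply: addr_ge0; first exact: sqr_ge0.
  apply: divr_ge0 => //; apply: mulr_ge0; [lra | exact: ltW].
have h0' : 0 <= h by rewrite /h; apply: divr_ge0 => //; lra.
have Evm : (v - mu1) ^+ 2 = h ^+ 2 + D by rewrite /v /h /D; field.
have Evm0 : 0 <= v - mu1 by rewrite /v; lra.
have P1a : forall y, -1 <= y -> s.[v - S y] = y.
  move=> y Hy; have [S0 S2] := HS y Hy; rewrite Hsig.
  have -> : (v - S y - L1) * (v - S y - mu2) = S y ^+ 2 - h ^+ 2 by rewrite /v /h; field.
  by rewrite S2; field.
have P1b : forall y, -1 <= y -> s.[v + S y] = y.
  move=> y Hy; have [S0 S2] := HS y Hy; rewrite Hsig.
  have -> : (v + S y - L1) * (v + S y - mu2) = S y ^+ 2 - h ^+ 2 by rewrite /v /h; field.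
  by rewrite S2; field.
have P2 : forall y, -1 <= y <= 1 -> h <= S y <= v - mu1.
  move=> y /andP[y0 y1]; have [S0 S2] := HS y y0.
  have A1 : h ^+ 2 <= S y ^+ 2 by rewrite S2 lerDl; apply: divr_ge0 => //;
     apply: mulr_ge0; [lra | exact: ltW].
  have A2 : S y ^+ 2 <= (v - mu1) ^+ 2.
    rewrite S2 Evm lerD2l ler_pdivrMr // mulrC ler_pM2l //; lra.
  apply/andP; split; nra.
have P3 : forall y y', -1 <= y -> y < y' -> S y < S y'.
  move=> y y' y0 yy'; have [S0 S2] := HS y y0.
  have [S0' S2'] := HS y' (le_trans y0 (ltW yy')).
  have A : S y ^+ 2 < S y' ^+ 2.
    rewrite S2 S2' ltrD2l ltr_pM2r ?invr_gt0 // ltr_pM2r //; lra.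
  nra.
have hv1 : v - h = L1 by rewrite /v /h; field.
have hv2 : v + h = mu2 by rewrite /v /h; field.
have hv3 : v + (v - mu1) = L2 by rewrite /v; lra.
have n0 : (0 < n)%N by [].
pose c := fun k : nat => cos (k%:R * (pi : R) / n%:R).
pose f1 := fun k => v - S (c k).
pose f2 := fun k => v + S (- c k).
have Hc : forall k, (k <= n)%N -> (chebT R n).[c k] = (-1) ^+ k /\ -1 <= c k <= 1.
  by move=> k Hk; apply: cos_pts.
have Hcd : forall k, (k < n)%N -> c k.+1 < c k by move=> k Hk; apply: cos_pts_decr.
have Hf1i : forall k, (k < n)%N -> f1 k < f1 k.+1.
  move=> k Hk; rewrite /f1 ltrD2l ltrN2; apply: P3 (Hcd k Hk).
  by case/andP: (Hc k.+1 Hk).2.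
have Hf1L : forall k, (k <= n)%N -> Lambda mu1 L1 mu2 L2 (f1 k).
  move=> k Hk; have [_ Hck2] := Hc k Hk; left.
  have := P2 _ Hck2; move/andP => [a b]; rewrite /f1; apply/andP; split; lra.
have Hf1s : forall k, (k <= n)%N -> 0 < (-1) ^+ k * 1 * r.[f1 k].
  move=> k Hk; have [Hck1 Hck2] := Hc k Hk; move/andP: (Hck2) => [ca cb].
  rewrite mulr1 Hr Hq /f1 P1a // Hck1; apply: sgn_pos; [exact: sign_sq| |lra].
  exact: Hpb (Hf1L k Hk).
have Hf2i : forall k, (k < n)%N -> f2 k < f2 k.+1.
  move=> k Hk; rewrite /f2 ltrD2l; apply: P3; last by rewrite ltrN2; apply: Hcd.
  by case/andP: (Hc k (ltnW Hk)).2 => ca cb; lra.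
have Hf2L : forall k, (k <= n)%N -> Lambda mu1 L1 mu2 L2 (f2 k).
  move=> k Hk; have [_ /andP[ca cb]] := Hc k Hk; right.
  have : -1 <= - c k <= 1 by apply/andP; split; lra.
  move=> /P2 /andP [a b]; rewrite /f2; apply/andP; split; lra.
have Hf2s : forall k, (k <= n)%N -> 0 < (-1) ^+ k * (-1) ^+ n * r.[f2 k].
  move=> k Hk; have [Hck1 /andP[ca cb]] := Hc k Hk.
  rewrite Hr Hq /f2 P1b; last by lra.
  rewrite chebT_N Hck1 [(-1) ^+ n * (-1) ^+ k]mulrC; apply: sgn_pos; last by lra.
    by rewrite mulrACA !sign_sq mulr1.
  exact: Hpb (Hf2L k Hk).
have [s1 [sz1 [so1 [in1 ro1]]]] := alt_roots R r n f1 1 Hf1i Hf1s.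
have [s2 [sz2 [so2 [in2 ro2]]]] := alt_roots R r n f2 ((-1) ^+ n) Hf2i Hf2s.
have Hf10 : mu1 <= f1 0%N by case: (Hf1L 0%N isT) => /andP[] //; lra.
have Hf1n : f1 n <= L1.
  have [_ Hck2] := Hc n (leqnn n); have := P2 _ Hck2; case/andP => a b; rewrite /f1; lra.
have Hf20 : mu2 <= f2 0%N.
  have [_ /andP[ca cb]] := Hc 0%N isT.
  have : -1 <= - c 0%N <= 1 by apply/andP; split; lra.
  move=> /P2 /andP [a b]; rewrite /f2; lra.
have rn0 : r != 0.
  apply/negP => /eqP r0; have := Hf1s 0%N isT; rewrite r0 horner0 mulr0; lra.
have Hrs : (size ((0%R : R) :: s1 ++ s2) < size r)%N.
  apply: max_poly_roots => //.
    by rewrite /= all_cat ro1 ro2 /root Hr0 eqxx.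
  rewrite /= mem_cat negb_or cat_uniq (lt_sorted_uniq so1) (lt_sorted_uniq so2) /=.
  apply/andP; split; first (apply/andP; split).
  - apply/negP => H0; move/allP: in1 => /(_ (0%R : R) H0) /andP[a _].
    by have := lt_trans (lt_le_trans h0 Hf10) a; rewrite ltxx.
  - apply/negP => H0; move/allP: in2 => /(_ (0%R : R) H0) /andP[a _].
    have := lt_le_trans (lt_trans h0 (lt_trans h1 h2)) Hf20.
    by move=> H; have := lt_trans H a; rewrite ltxx.
  - rewrite andbT; apply/hasPn => y Hy2; apply/negP => Hy1.
    move/allP: in1 => /(_ y Hy1) /andP[_ a]; move/allP: in2 => /(_ y Hy2) /andP[b _].
    have := lt_trans (lt_le_trans (lt_trans (lt_le_trans a Hf1n) h2) Hf20) b.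
    by rewrite ltxx.
have Hrsz : (size r <= (2 * n).+1)%N.
  apply: leq_trans (size_polyD _ _) _; rewrite size_polyN geq_max Hqsz /=.
  exact: leq_trans (size_scale_leq _ _) Hpsz.
by have := leq_trans Hrs Hrsz; rewrite /= size_cat sz1 sz2 mul2n -addnn ltnn.
Qed.



Lemma cos_val (R : realType) (N k : nat) : (0 < N)%N ->
  (chebT R N).[cos (k%:R * pi / N%:R)] = (-1) ^+ k.
Proof.
move=> HN; rewrite chebT_cos.
have -> : N%:R * (k%:R * pi / N%:R) = k%:R * pi :> R.
  by field; rewrite pnatr_eq0 -lt0n.
exact: cos_natpi.
Qed.

Lemma two_roots (R : realType) (u w : R) : -1 <= u -> u < w -> w <= 1 ->
  exists N, (0 < N)%N /\ exists y1 y2, u < y1 < w /\ u < y2 < w /\ y1 != y2 /\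
     root (chebT R N) y1 /\ root (chebT R N) y2.
Proof.
move=> hu huw hw.
have hu' : -1 <= u <= 1 by rewrite hu /=; exact: (le_trans (ltW huw) hw).
have hw' : -1 <= w <= 1 by rewrite hw andbT; exact: (le_trans hu (ltW huw)).
have [Ha1 Ha2] := acos_def hw'; have [Hb1 Hb2] := acos_def hu'.
set a := acos w in Ha1 Ha2 *; set b := acos u in Hb1 Hb2 *.
have Ia : a \in `[0, (pi : R)] by rewrite in_itv.
have Ib : b \in `[0, (pi : R)] by rewrite in_itv.
have ab : a < b by rewrite -(ltr_cos Ia Ib) Ha2 Hb2.
have pip := pi_gt0 R.
move/andP: Ha1 => [a0 api]; move/andP: Hb1 => [b0 bpi].
set d := b - a.
have d0 : 0 < d by rewrite subr_gt0.
pose N := (Num.Def.archi_bound (3 * pi / d)).+1.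
have N0 : (0 < N)%N by [].
have NR : 0 < N%:R :> R by rewrite ltr0n.
have HN : 3 * pi / d < N%:R.
  apply: lt_trans (archi_boundP _) _; first by rewrite divr_ge0 // ?mulr_ge0 // ltW.
  by rewrite ltr_nat.
have HN' : 3 * pi / N%:R < d.
  by rewrite ltr_pdivrMr // [d * _]mulrC -ltr_pdivrMr.
pose P := fun k : nat => a < k%:R * pi / N%:R.
have exP : exists k, P k.
  exists N; rewrite /P mulrAC divff ?gt_eqF // mul1r; exact: lt_le_trans ab bpi.
case: (ex_minnP exP) => k Pk Hmin; rewrite /P in Pk.
have k0 : (0 < k)%N.
  rewrite lt0n; apply/negP => /eqP k0; move: Pk; rewrite /P k0 mul0r mul0r.
  by rewrite ltNge a0.
have Pk1 : (k.-1)%:R * pi / N%:R <= a.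
  rewrite leNgt; apply/negP => H; have := Hmin _ H; move: k0; clear; lia.
have Ek : k%:R = (k.-1)%:R + 1 :> R by rewrite natr1 (prednK k0).
pose t := fun j : nat => (k + j)%:R * (pi : R) / N%:R.
have Ht : forall j, (j <= 2)%N -> a < t j < b.
  move=> j hj; rewrite /t natrD; apply/andP; split.
    apply: lt_le_trans Pk _; rewrite ler_pM2r ?invr_gt0 // ler_pM2r //.
    by rewrite lerDl ler0n.
  have : (j%:R : R) <= 2 by rewrite (ler_nat R j 2).
  move: Pk1 HN'; rewrite Ek /d => H1 H2 H3.
  have E : ((k.-1)%:R + 1 + j%:R) * (pi : R) / N%:R
           = (k.-1)%:R * pi / N%:R + (1 + j%:R) * pi / N%:R by field; rewrite gt_eqF.
  rewrite E.
  have : (1 + j%:R) * (pi : R) / N%:R <= 3 * pi / N%:R.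
    rewrite ler_pM2r ?invr_gt0 // ler_pM2r //; lra.
  lra.
have It : forall j, (j <= 2)%N -> t j \in `[0, (pi : R)].
  move=> j hj; have /andP[h1 h2] := Ht j hj; rewrite in_itv /=.
  by apply/andP; split; [exact: le_trans a0 (ltW h1) | exact: le_trans (ltW h2) bpi].
have Hc : forall j, (j <= 2)%N -> u < cos (t j) < w.
  move=> j hj; have /andP[h1 h2] := Ht j hj.
  by rewrite -Ha2 -Hb2 (ltr_cos (It j hj) Ib) (ltr_cos Ia (It j hj)) h1 h2.
have Hd : forall j, (j < 2)%N -> cos (t j.+1) < cos (t j).
  move=> j hj; rewrite (ltr_cos (It j (ltnW hj)) (It j.+1 hj)).
  by rewrite /t ltr_pM2r ?invr_gt0 // ltr_pM2r // ltr_nat addnS.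
have Hv : forall j, (chebT R N).[cos (t j)] = (-1) ^+ (k + j) by move=> j; exact: cos_val.
have neg : forall j, (chebT R N).[cos (t j.+1)] * (chebT R N).[cos (t j)] < 0.
  move=> j; rewrite !Hv addnS exprS mulN1r mulNr sign_sq; lra.
have [y1 Hy1 Ry1] := poly_ivtoo (ltW (Hd 0%N isT)) (neg 0%N).
have [y2 Hy2 Ry2] := poly_ivtoo (ltW (Hd 1%N isT)) (neg 1%N).
move: Hy1 Hy2; rewrite !in_itv /= => /andP[y11 y12] /andP[y21 y22].
exists N; split => //; exists y1, y2.
have /andP[c01 c02] := Hc 0%N isT; have /andP[c11 c12] := Hc 1%N isT.
have /andP[c21 c22] := Hc 2%N isT.
split; first by apply/andP; split; lra.
split; first by apply/andP; split; lra.
split => //; rewrite gt_eqF //; exact: lt_trans y22 y11.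
Qed.


Definition region (R : realType) (mu1 L1 mu2 L2 l rr : R) : Prop :=
  forall a a', l < a < rr -> l < a' < rr -> 0 < a * a' /\
    exists2 dl, 0 < dl & forall x, Lambda mu1 L1 mu2 L2 x -> dl <= (x - a) * (x - a').

Lemma nonopt (R : realType) (mu1 L1 mu2 L2 : R) (s : {poly R}) (l rr u w : R) :
  0 < mu1 -> mu1 < L1 -> L1 < mu2 -> mu2 < L2 -> 1 < s.[0] -> l < rr ->
  -1 <= u -> u < w -> w <= 1 ->
  (forall y, u < y < w -> (s.[l] < y < s.[rr]) \/ (s.[rr] < y < s.[l])) ->
  region R mu1 L1 mu2 L2 l rr ->
  exists n, (1 <= n)%N /\ ~ is_solution mu1 L1 mu2 L2 n (chebT R n \Po s).
Proof.
move=> h0 h1 h2 h3 hs0 hlr hu huw hw Hbet Hreg.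
have [N [N0 [y1 [y2 [Hy1 [Hy2 [y12 [R1 R2]]]]]]]] := two_roots R u w hu huw hw.
have pre : forall y, u < y < w -> exists2 x, l < x < rr & s.[x] = y.
  move=> y Hy.
  have Hneg : (s - y%:P).[l] * (s - y%:P).[rr] < 0.
    rewrite !hornerD !hornerN !hornerC.
    by case: (Hbet y Hy) => /andP[a b]; nra.
  have [x Hx Rx] := poly_ivtoo (ltW hlr) Hneg.
  exists x; first by move: Hx; rewrite in_itv.
  by move: Rx; rewrite /root hornerD hornerN hornerC subr_eq0 => /eqP.
have [a Ha Hsa] := pre y1 Hy1; have [a' Ha' Hsa'] := pre y2 Hy2.
have aa' : a != a' by apply: contraNneq y12 => E; rewrite -Hsa -Hsa' E.
have [Hpos [dl dl0 Hdl]] := Hreg a a' Ha Ha'.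
exists N; split => // -[[Hqsz Hqb] Hopt].
set q := chebT R N \Po s in Hqsz Hqb Hopt *.
have Hq : forall x, q.[x] = (chebT R N).[s.[x]] by move=> x; rewrite horner_comp.
have rqa : root q a by rewrite /root Hq Hsa.
have rqa' : root q a' by rewrite /root Hq Hsa'.
have [g1 Hg1] := factor_theorem _ _ rqa.
have rg1 : root g1 a'.
  move: rqa'; rewrite /root Hg1 hornerM hornerD hornerN hornerX hornerC mulf_eq0.
  by case/orP => // /eqP E; move: aa'; rewrite eq_sym -subr_eq0 E eqxx.
have [g Hg] := factor_theorem _ _ rg1.
pose W := ('X - a%:P) * ('X - a'%:P) : {poly R}.
have HqW : q = g * W by rewrite Hg1 Hg /W -mulrA [('X - a'%:P) * _]mulrC.
have HW : forall x, W.[x] = (x - a) * (x - a').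
  by move=> x; rewrite /W hornerM !hornerD !hornerN hornerX !hornerC.
have q0 : 1 <= q.[0] by rewrite Hq; apply: chebT_ge1; exact: ltW.
have g0 : 0 < g.[0].
  move: q0; rewrite HqW hornerM HW !sub0r mulrNN => H.
  have : 0 < g.[0] * (a * a') by apply: lt_le_trans H; exact: ltr01.
  by rewrite pmulr_lgt0.
have L20 : 0 < L2 by lra.
pose e := dl / L2.
have e0 : 0 < e by rewrite divr_gt0.
pose V := W - e *: ('X - mu1%:P).
pose p := g * V.
have Hp : forall x, p.[x] = g.[x] * ((x - a) * (x - a') - e * (x - mu1)).
  by move=> x; rewrite /p /V hornerM hornerD hornerN hornerZ hornerD hornerN hornerX hornerC HW.
have gn0 : g != 0 by apply/negP => /eqP g00; move: g0; rewrite g00 horner0 ltxx.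
have Wsz : size W = 3%N by rewrite /W size_mul ?size_XsubC // -size_poly_eq0 size_XsubC.
have Wn0 : W != 0 by rewrite -size_poly_eq0 Wsz.
have Hpsz : (size p <= (2 * N).+1)%N.
  apply: leq_trans (size_polyMleq _ _) _.
  have : (size V <= 3)%N.
    apply: leq_trans (size_polyD _ _) _; rewrite size_polyN geq_max Wsz leqnn /=.
    by apply: leq_trans (size_scale_leq _ _) _; rewrite size_XsubC.
  move: Hqsz; rewrite HqW size_mul // Wsz.
  move: (size g) (size V) => m1 m2 H1 H2.
  by apply: leq_trans H1; rewrite -!subn1 leq_sub2r // leq_add2l.
have Hpfeas : feasible mu1 L1 mu2 L2 N p.
  split => // x Hx.
  have Hqx := Hqb x Hx; rewrite HqW hornerM HW in Hqx.
  have Hx1 : mu1 <= x <= L2 by case: Hx => /andP[c d]; apply/andP; split; lra.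
  have Hd := Hdl x Hx.
  rewrite Hp normrM; apply: le_trans Hqx; rewrite normrM ler_wpM2l //.
  have he : 0 <= e * (x - mu1) <= dl.
    move/andP: Hx1 => [c d]; apply/andP; split; first by apply: mulr_ge0; lra.
    have : e * (x - mu1) <= e * L2 by rewrite ler_wpM2l //; [lra|lra].
    by rewrite /e mulfVK ?gt_eqF.
  move/andP: he => [he1 he2].
  rewrite (ger0_norm (le_trans (ltW dl0) Hd)) ler_norml; apply/andP; split; lra.
have := Hopt p Hpfeas; rewrite Hp HqW hornerM HW => H.
have : 0 < g.[0] * (e * mu1) by apply: mulr_gt0 => //; apply: mulr_gt0.
move=> Hgp; move: H; rewrite -subr_ge0.
have -> : g.[0] * ((0 - a) * (0 - a')) - g.[0] * ((0 - a) * (0 - a') - e * (0 - mu1))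
   = - (g.[0] * (e * mu1)) by ring.
by rewrite oppr_ge0 leNgt Hgp.
Qed.


Lemma Lambda_bounds (R : realType) (mu1 L1 mu2 L2 x : R) :
  mu1 < L1 -> L1 < mu2 -> mu2 < L2 -> Lambda mu1 L1 mu2 L2 x -> mu1 <= x <= L2.
Proof. by move=> h1 h2 h3 [/andP[a b]|/andP[a b]]; apply/andP; split; lra. Qed.

Lemma reg0 (R : realType) (mu1 L1 mu2 L2 : R) :
  0 < mu1 -> mu1 < L1 -> L1 < mu2 -> mu2 < L2 -> region R mu1 L1 mu2 L2 0 mu1.
Proof.
move=> h0 h1 h2 h3 a a' /andP[a0 a1] /andP[b0 b1]; split; first exact: mulr_gt0.
exists ((mu1 - a) * (mu1 - a')); first by rewrite mulr_gt0 // subr_gt0.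
move=> x Hx; have /andP[x1 _] := Lambda_bounds R mu1 L1 mu2 L2 x h1 h2 h3 Hx.
apply: ler_pM; rewrite ?subr_ge0 ?lerD2r //; exact: ltW.
Qed.

Lemma reg3 (R : realType) (mu1 L1 mu2 L2 rr : R) :
  0 < mu1 -> mu1 < L1 -> L1 < mu2 -> mu2 < L2 -> region R mu1 L1 mu2 L2 L2 rr.
Proof.
move=> h0 h1 h2 h3 a a' /andP[a0 a1] /andP[b0 b1].
have L20 : 0 < L2 by lra.
split; first by apply: mulr_gt0; lra.
exists ((a - L2) * (a' - L2)); first by rewrite mulr_gt0 // subr_gt0.
move=> x Hx; have /andP[_ x1] := Lambda_bounds R mu1 L1 mu2 L2 x h1 h2 h3 Hx.
have -> : (x - a) * (x - a') = (a - x) * (a' - x) by ring.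
apply: ler_pM; rewrite ?subr_ge0 ?lerD2l ?lerN2 //; exact: ltW.
Qed.

Lemma gap_e (R : realType) (L1 mu2 a : R) : L1 < a < mu2 ->
  0 < (a - L1) * (mu2 - a) / (mu2 - L1) /\
  (a - L1) * (mu2 - a) / (mu2 - L1) <= a - L1 /\
  (a - L1) * (mu2 - a) / (mu2 - L1) <= mu2 - a.
Proof.
move=> /andP[a1 a2]; have d0 : 0 < mu2 - L1 by lra.
split; first by rewrite divr_gt0 // mulr_gt0 // subr_gt0.
split; rewrite ler_pdivrMr //.
  by apply: ler_wpM2l; lra.
by rewrite mulrC; apply: ler_wpM2l; lra.
Qed.

Lemma reggap (R : realType) (mu1 L1 mu2 L2 l rr : R) :
  0 < mu1 -> mu1 < L1 -> L1 < mu2 -> mu2 < L2 -> L1 <= l -> rr <= mu2 ->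
  region R mu1 L1 mu2 L2 l rr.
Proof.
move=> h0 h1 h2 h3 hl hr a a' /andP[a0 a1] /andP[b0 b1].
have Ha : L1 < a < mu2 by apply/andP; split; [exact: le_lt_trans hl a0|exact: lt_le_trans a1 hr].
have Ha' : L1 < a' < mu2 by apply/andP; split; [exact: le_lt_trans hl b0|exact: lt_le_trans b1 hr].
split; first by apply: mulr_gt0; lra.
have [e0 [e1 e2]] := gap_e R L1 mu2 a Ha; have [e0' [e1' e2']] := gap_e R L1 mu2 a' Ha'.
set e := (a - L1) * (mu2 - a) / (mu2 - L1) in e0 e1 e2 *.
set e' := (a' - L1) * (mu2 - a') / (mu2 - L1) in e0' e1' e2' *.
exists (e * e'); first exact: mulr_gt0.
move=> x [/andP[x1 x2]|/andP[x1 x2]].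
  have -> : (x - a) * (x - a') = (a - x) * (a' - x) by ring.
  by apply: ler_pM; [exact: ltW|exact: ltW|lra|lra].
by apply: ler_pM; [exact: ltW|exact: ltW|lra|lra].
Qed.


Lemma sigma0_gt1 (R : realType) (mu1 L1 mu2 L2 : R) (s : {poly R}) :
  0 < mu1 -> mu1 < L1 -> L1 < mu2 -> mu2 < L2 ->
  is_solution mu1 L1 mu2 L2 1 s -> 1 < s.[0].
Proof.
move=> h0 h1 h2 h3 [_ Hopt].
pose K := L2 - mu1.
have K0 : 0 < K by rewrite /K subr_gt0; lra.
pose tau := (1 + 2 * mu1 / K)%:P - (2 / K) *: 'X : {poly R}.
have Ht : forall x, tau.[x] = 1 - 2 * ((x - mu1) / K).
  move=> x; rewrite /tau hornerD hornerN hornerZ hornerC hornerX; field.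
  by rewrite gt_eqF.
have Hf : feasible mu1 L1 mu2 L2 1 tau.
  split.
    apply: leq_trans (size_polyD _ _) _; rewrite size_polyN geq_max size_polyC.
    apply/andP; split; first by apply: leq_trans (leq_b1 _) _.
    by apply: leq_trans (size_scale_leq _ _) _; rewrite size_polyX; lia.
  move=> x Hx; have /andP[x1 x2] := Lambda_bounds R mu1 L1 mu2 L2 x h1 h2 h3 Hx.
  have z0 : 0 <= (x - mu1) / K by apply: divr_ge0; [rewrite subr_ge0 | exact: ltW].
  have z1 : (x - mu1) / K <= 1 by rewrite ler_pdivrMr // mul1r /K lerD2r.
  rewrite Ht ler_norml; apply/andP; split; lra.
have := Hopt tau Hf; rewrite Ht.
have : 0 < mu1 / K by rewrite divr_gt0.
have -> : 1 - 2 * ((0 - mu1) / K) = 1 + 2 * (mu1 / K) by rewrite sub0r mulNr mulrN opprK.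
lra.
Qed.

Lemma onlyif_dir (R : realType) (mu1 L1 mu2 L2 : R) :
  0 < mu1 -> mu1 < L1 -> L1 < mu2 -> mu2 < L2 ->
  (exists sigma : {poly R},
      size sigma = 3%N /\
      (forall x, Lambda mu1 L1 mu2 L2 x -> -1 <= sigma.[x] <= 1) /\
      (forall n : nat, (1 <= n)%N ->
         is_solution mu1 L1 mu2 L2 n (chebT R n \Po sigma))) ->
  L1 - mu1 = L2 - mu2.
Proof.
move=> h0 h1 h2 h3 [s [Hs3 [Hr Hsol]]].
have hs0 : 1 < s.[0].
  apply: (sigma0_gt1 R mu1 L1 mu2 L2 s h0 h1 h2 h3).
  by have := Hsol 1%N isT; rewrite chebT1 comp_polyX.
have contra : forall l rr u w, l < rr -> -1 <= u -> u < w -> w <= 1 ->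
    (forall y, u < y < w -> (s.[l] < y < s.[rr]) \/ (s.[rr] < y < s.[l])) ->
    region R mu1 L1 mu2 L2 l rr -> False.
  move=> l rr u w hlr hu huw hw Hb Hreg.
  have [n [Hn Hns]] := nonopt R mu1 L1 mu2 L2 s l rr u w h0 h1 h2 h3 hs0 hlr hu huw hw Hb Hreg.
  exact: Hns (Hsol n Hn).
have Hse := horner_size3 R s; have s2n := lead_size3 R s Hs3.
set s0 := s`_0 in Hse; set s1 := s`_1 in Hse; set s2 := s`_2 in Hse s2n.
have Hdiff : forall x y, s.[x] - s.[y] = (x - y) * (s1 + s2 * (x + y)).
  by move=> x y; rewrite !Hse //; ring.
have Lmu1 : Lambda mu1 L1 mu2 L2 mu1 by left; rewrite lexx /=; exact: ltW.
have LL1 : Lambda mu1 L1 mu2 L2 L1 by left; rewrite lexx andbT; exact: ltW.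
have Lmu2 : Lambda mu1 L1 mu2 L2 mu2 by right; rewrite lexx /=; exact: ltW.
have LL2 : Lambda mu1 L1 mu2 L2 L2 by right; rewrite lexx andbT; exact: ltW.
have /andP[m1a m1b] := Hr _ Lmu1.
have /andP[l1a l1b] := Hr _ LL1.
have /andP[m2a m2b] := Hr _ Lmu2.
have /andP[l2a l2b] := Hr _ LL2.
case: (ltrP s.[mu1] 1) => Hmu1.
  exfalso; apply: (contra 0 mu1 s.[mu1] 1 h0 m1a Hmu1 (lexx _)).
    by move=> y /andP[y1 y2]; right; rewrite y1 /=; exact: lt_trans y2 hs0.
  exact: reg0.
have Hm1 : s.[mu1] = 1 by apply/eqP; rewrite eq_le m1b Hmu1.
have Rgap : region R mu1 L1 mu2 L2 L1 mu2 by apply: reggap => //.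
case: (ltgtP s.[L1] s.[mu2]) => HLm.
- exfalso; apply: (contra L1 mu2 s.[L1] s.[mu2] h2 l1a HLm m2b) => //.
  by move=> y Hy; left.
- exfalso; apply: (contra L1 mu2 s.[mu2] s.[L1] h2 m2a HLm l1b) => //.
  by move=> y Hy; right.
have K1 : s1 + s2 * (L1 + mu2) = 0.
  have := Hdiff L1 mu2; rewrite HLm subrr => /esym /eqP.
  by rewrite mulf_eq0 subr_eq0 (lt_eqF h2) /= => /eqP.
have K1' : s1 = - (s2 * (L1 + mu2)) by lra.
case: (ltrP (-1) s.[L1]) => Hc.
- exfalso.
  have Hc1 : s.[L1] < 1.
    rewrite lt_neqAle l1b andbT; apply/negP => /eqP E.
    have := Hdiff mu1 L1; rewrite Hm1 E subrr K1' => /esym /eqP.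
    have -> : (mu1 - L1) * (- (s2 * (L1 + mu2)) + s2 * (mu1 + L1))
             = s2 * ((mu1 - L1) * (mu1 - mu2)) by ring.
    rewrite !mulf_eq0 (negbTE s2n) /= !subr_eq0 (lt_eqF h1) /=.
    by rewrite (lt_eqF (lt_trans h1 h2)).
  pose m := (L1 + mu2) / 2.
  have hm1 : L1 < m by rewrite /m; lra.
  have hm2 : m <= mu2 by rewrite /m; lra.
  have Rg : region R mu1 L1 mu2 L2 L1 m by apply: reggap => //.
  have E5 : s.[m] - s.[L1] = s2 * ((m - L1) * (m - mu2)) by rewrite Hdiff K1' /m; ring.
  have Hmn : s.[m] != s.[L1].
    have nz1 : m - L1 != 0 by rewrite subr_eq0 gt_eqF.
    have nz2 : m - mu2 != 0 by rewrite subr_eq0 /m; apply/negP => /eqP E; lra.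
    by rewrite -subr_eq0 E5 !mulf_neq0.
  case: (ltgtP s.[m] s.[L1]) Hmn => // Hml _.
  + case: (lerP s.[m] (-1)) => Hm.
    * apply: (contra L1 m (-1) s.[L1] hm1 (lexx _) Hc l1b _ Rg).
      by move=> y /andP[y1 y2]; right; rewrite y2 andbT; exact: le_lt_trans Hm y1.
    * apply: (contra L1 m s.[m] s.[L1] hm1 (ltW Hm) Hml l1b _ Rg).
      by move=> y Hy; right.
  + case: (lerP 1 s.[m]) => Hm.
    * apply: (contra L1 m s.[L1] 1 hm1 l1a Hc1 (lexx _) _ Rg).
      by move=> y /andP[y1 y2]; left; rewrite y1 /=; exact: lt_le_trans y2 Hm.
    * apply: (contra L1 m s.[L1] s.[m] hm1 l1a Hml (ltW Hm) _ Rg).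
      by move=> y Hy; left.
have HL1 : s.[L1] = -1 by apply/eqP; rewrite eq_le l1a Hc.
have Hs2 : 0 < s2.
  have := Hdiff mu1 L1; rewrite Hm1 HL1 K1'.
  have -> : (mu1 - L1) * (- (s2 * (L1 + mu2)) + s2 * (mu1 + L1))
           = s2 * ((mu1 - L1) * (mu1 - mu2)) by ring.
  move=> E; have : 0 < s2 * ((mu1 - L1) * (mu1 - mu2)) by rewrite -E; lra.
  by rewrite pmulr_lgt0 // nmulr_rgt0 subr_lt0 //; exact: lt_trans h1 h2.
pose x3 := L1 + mu2 - mu1.
have E3 : s.[x3] - s.[mu1] = 0 by rewrite Hdiff K1' /x3; ring.
have Hx3 : s.[x3] = 1 by move/eqP: E3; rewrite Hm1 subr_eq0 => /eqP.
have E4 : s.[L2] - s.[x3] = s2 * ((L2 - x3) * (L2 - mu1)) by rewrite Hdiff K1' /x3; ring.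
have L2m : 0 < L2 - mu1 by rewrite subr_gt0; lra.
case: (ltgtP x3 L2) => Hx.
- exfalso.
  have : 0 < s2 * ((L2 - x3) * (L2 - mu1)) by rewrite !mulr_gt0 // subr_gt0.
  rewrite -E4; lra.
- exfalso.
  have P4 : 0 < s2 * ((x3 - L2) * (L2 - mu1)) by rewrite !mulr_gt0 // subr_gt0.
  have Hl2 : s.[L2] < 1.
    have : s.[L2] - s.[x3] = - (s2 * ((x3 - L2) * (L2 - mu1))) by rewrite E4; ring.
    lra.
  apply: (contra L2 x3 s.[L2] 1 Hx l2a Hl2 (lexx _)).
    by move=> y /andP[y1 y2]; left; rewrite y1 Hx3.
  exact: reg3.
by rewrite /x3 in Hx; lra.
Qed.


Theorem mainTheorem13 (R : realType) (mu1 L1 mu2 L2 : R) :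
  0 < mu1 -> mu1 < L1 -> L1 < mu2 -> mu2 < L2 ->
  (exists sigma : {poly R},
      size sigma = 3%N /\
      (forall x, Lambda mu1 L1 mu2 L2 x -> -1 <= sigma.[x] <= 1) /\
      (forall n : nat, (1 <= n)%N ->
         is_solution mu1 L1 mu2 L2 n (chebT R n \Po sigma)))
  <-> L1 - mu1 = L2 - mu2.
Proof.
move=> h0 h1 h2 h3; split.
  exact: onlyif_dir.
exact: if_dir.
Qed.
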